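(* Let $M^2$ be a strongly regular minimal surface of general type in $\mathbb R^4$ parameterized by canonical parameters $(u,v)$ (semi-canonical with $E=G=|\mu^2-\nu^2|^{-1/2}$). Then $$\gamma_1=\big(|\mu^2-\nu^2|^{1/4}\big)_v,\quad \gamma_2=\big(|\mu^2-\nu^2|^{1/4}\big)_u,\quad \beta_1=-|\mu^2-\nu^2|^{1/4}\Big(\ln\sqrt{\big|\tfrac{\mu+\nu}{\mu-\nu}\big|}\Big)_v,\quad \beta_2=|\mu^2-\nu^2|^{1/4}\Big(\ln\sqrt{\big|\tfrac{\mu+\nu}{\mu-\nu}\big|}\Big)_u,$$ and the invariants $\mu,\nu$ satisfy $$\tfrac14\sqrt{|\mu^2-\nu^2|}\,\Delta\ln|\mu^2-\nu^2|+\nu^2+\mu^2=0,\qquad \tfrac12\sqrt{|\mu^2-\nu^2|}\,\Delta\ln\Big|\frac{\mu+\nu}{\mu-\nu}\Big|+2\nu\mu=0,$$ where $\Delta=\partial_u^2+\partial_v^2$. Equivalently, in terms of $K$ and $\varkappa$: $\tfrac18(K^2-\varkappa^2)^{1/4}\Delta\ln(K^2-\varkappa^2)-K=0$ and $\tfrac14(K^2-\varkappa^2)^{1/4}\Delta\ln\frac{K-\varkappa}{K+\varkappa}+\varkappa=0$.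
   Context: $\mathbb R^4$ carries the standard metric $g=\langle\cdot,\cdot\rangle$ and flat connection $\nabla'$; everything is smooth and local. For a regular surface $M^2: z=z(u,v)$ let $E,F,G$ be the first fundamental form coefficients, $\sigma$ the second fundamental form, $K$ the Gauss curvature, and $\varkappa$ the curvature of the normal connection, $\varkappa=g(R^\perp(x,y)n_2,n_1)$ for a positively oriented orthonormal frame $(x,y,n_1,n_2)$ with $x,y$ tangent. Minimal means $\sigma(x,x)+\sigma(y,y)=0$ for orthonormal tangent $x,y$. A minimal surface is of general type if $K^2-\varkappa^2>0$ and $\varkappa\neq0$ everywhere. The ellipse of curvature at $p$ is $\{\sigma(v,v): v\in T_pM^2,\ |v|=1\}$; a tangent line is canonical if it is collinear with an axis of this ellipse. The geometric frame is a positively oriented orthonormal frame $\{x,y,n_1,n_2\}$ with $x,y$ canonical tangent fields and $n_1,n_2$ normal, satisfying $\nabla'_xx=\gamma_1y+\nu n_1$, $\nabla'_xy=-\gamma_1x+\mu n_2$, $\nabla'_yx=-\gamma_2y+\mu n_2$, $\nabla'_yy=\gamma_2x-\nu n_1$, $\nabla'_xn_1=-\nu x+\beta_1n_2$, $\nabla'_yn_1=\nu y+\beta_2n_2$, $\nabla'_xn_2=-\mu y-\beta_1n_1$, $\nabla'_yn_2=-\mu x-\beta_2n_1$, with $\mu>0$, $\nu\ne0$, $\mu^2\ne\nu^2$; the functions $\nu,\mu,\gamma_1,\gamma_2,\beta_1,\beta_2$ are the invariants of $M^2$ (and $K=-(\mu^2+\nu^2)$, $\varkappa=2\nu\mu$).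 Parameters $(u,v)$ are semi-canonical if the parametric lines are integral curves of the canonical tangents, with $F=0$, $x=z_u/\sqrt E$, $y=z_v/\sqrt G$; then $\gamma_1=-y(\ln\sqrt E)$, $\gamma_2=-x(\ln\sqrt G)$. A minimal surface of general type is strongly regular if $\gamma_1\gamma_2\neq0$ everywhere. *)

(* Defs.v *)
From Stdlib Require Import Reals Lra.
Open Scope R_scope.

Record V4 := mkV4 { c0 : R; c1 : R; c2 : R; c3 : R }.

Definition vadd (a b : V4) : V4 :=
  mkV4 (c0 a + c0 b) (c1 a + c1 b) (c2 a + c2 b) (c3 a + c3 b).
Definition vscale (k : R) (a : V4) : V4 :=
  mkV4 (k * c0 a) (k * c1 a) (k * c2 a) (k * c3 a).
Definition dot (a b : V4) : R :=
  c0 a * c0 b + c1 a * c1 b + c2 a * c2 b + c3 a * c3 b.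

Definition det3 (a11 a12 a13 a21 a22 a23 a31 a32 a33 : R) : R :=
  a11 * (a22 * a33 - a23 * a32) - a12 * (a21 * a33 - a23 * a31)
  + a13 * (a21 * a32 - a22 * a31).

Definition det4 (a b c d : V4) : R :=
  c0 a * det3 (c1 b) (c1 c) (c1 d) (c2 b) (c2 c) (c2 d) (c3 b) (c3 c) (c3 d)
  - c0 b * det3 (c1 a) (c1 c) (c1 d) (c2 a) (c2 c) (c2 d) (c3 a) (c3 c) (c3 d)
  + c0 c * det3 (c1 a) (c1 b) (c1 d) (c2 a) (c2 b) (c2 d) (c3 a) (c3 b) (c3 d)
  - c0 d * det3 (c1 a) (c1 b) (c1 c) (c2 a) (c2 b) (c2 c) (c3 a) (c3 b) (c3 c).

Definition pos_orthonormal (x y n1 n2 : V4) : Prop :=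
  dot x x = 1 /\ dot y y = 1 /\ dot n1 n1 = 1 /\ dot n2 n2 = 1 /\
  dot x y = 0 /\ dot x n1 = 0 /\ dot x n2 = 0 /\
  dot y n1 = 0 /\ dot y n2 = 0 /\ dot n1 n2 = 0 /\
  det4 x y n1 n2 > 0.

Definition open2 (U : R -> R -> Prop) : Prop :=
  forall u v, U u v -> exists d, d > 0 /\
    forall u' v', Rabs (u' - u) < d -> Rabs (v' - v) < d -> U u' v'.

Definition cont2 (U : R -> R -> Prop) (f : R -> R -> R) : Prop :=
  forall u v, U u v -> forall eps, eps > 0 -> exists d, d > 0 /\
    forall u' v', Rabs (u' - u) < d -> Rabs (v' - v) < d ->
      Rabs (f u' v' - f u v) < eps.

Definition pdu (f : R -> R -> R) (u v a : R) : Prop :=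
  derivable_pt_lim (fun s => f s v) u a.
Definition pdv (f : R -> R -> R) (u v a : R) : Prop :=
  derivable_pt_lim (fun t => f u t) v a.

Fixpoint Ck (k : nat) (U : R -> R -> Prop) (f : R -> R -> R) : Prop :=
  match k with
  | O => cont2 U f
  | S k' => cont2 U f /\ exists fu fv : R -> R -> R,
      (forall u v, U u v -> pdu f u v (fu u v) /\ pdv f u v (fv u v)) /\
      Ck k' U fu /\ Ck k' U fv
  end.

Definition smooth2 (U : R -> R -> Prop) (f : R -> R -> R) : Prop :=
  forall k, Ck k U f.

Definition smoothV (U : R -> R -> Prop) (F : R -> R -> V4) : Prop :=
  smooth2 U (fun u v => c0 (F u v)) /\ smooth2 U (fun u v => c1 (F u v)) /\
  smooth2 U (fun u v => c2 (F u v)) /\ smooth2 U (fun u v => c3 (F u v)).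

Definition pduV (F : R -> R -> V4) (u v : R) (A : V4) : Prop :=
  pdu (fun s t => c0 (F s t)) u v (c0 A) /\ pdu (fun s t => c1 (F s t)) u v (c1 A) /\
  pdu (fun s t => c2 (F s t)) u v (c2 A) /\ pdu (fun s t => c3 (F s t)) u v (c3 A).
Definition pdvV (F : R -> R -> V4) (u v : R) (A : V4) : Prop :=
  pdv (fun s t => c0 (F s t)) u v (c0 A) /\ pdv (fun s t => c1 (F s t)) u v (c1 A) /\
  pdv (fun s t => c2 (F s t)) u v (c2 A) /\ pdv (fun s t => c3 (F s t)) u v (c3 A).

Definition is_laplacian (U : R -> R -> Prop) (f L : R -> R -> R) : Prop :=
  exists fu fv fuu fvv : R -> R -> R,
    forall u v, U u v ->
      pdu f u v (fu u v) /\ pdv f u v (fv u v) /\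
      pdu fu u v (fuu u v) /\ pdv fv u v (fvv u v) /\
      L u v = fuu u v + fvv u v.

(* Main.v *)
Require Import Defs.
From Stdlib Require Import Reals Lra Psatz.
Open Scope R_scope.

Lemma Dv_eq f x l l' : derivable_pt_lim f x l -> l = l' -> derivable_pt_lim f x l'.
Proof. intros H ->; exact H. Qed.
Lemma Dv_plus f g x a b : derivable_pt_lim f x a -> derivable_pt_lim g x b ->
  derivable_pt_lim (fun t => f t + g t) x (a + b).
Proof. intros; apply (derivable_pt_lim_plus f g); auto. Qed.
Lemma Dv_minus f g x a b : derivable_pt_lim f x a -> derivable_pt_lim g x b ->
  derivable_pt_lim (fun t => f t - g t) x (a - b).
Proof. intros; apply (derivable_pt_lim_minus f g); auto. Qed.
Lemma Dv_mult f g x a b : derivable_pt_lim f x a -> derivable_pt_lim g x b ->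
  derivable_pt_lim (fun t => f t * g t) x (a * g x + f x * b).
Proof. intros; apply (derivable_pt_lim_mult f g); auto. Qed.
Lemma Dv_scal c f x a : derivable_pt_lim f x a ->
  derivable_pt_lim (fun t => c * f t) x (c * a).
Proof. intros; apply (derivable_pt_lim_scal f c); auto. Qed.
Lemma Dv_div f g x a b : derivable_pt_lim f x a -> derivable_pt_lim g x b -> g x <> 0 ->
  derivable_pt_lim (fun t => f t / g t) x ((a * g x - b * f x) / Rsqr (g x)).
Proof. intros; apply (derivable_pt_lim_div f g); auto. Qed.
Lemma Dv_const c x : derivable_pt_lim (fun _ => c) x 0.
Proof. apply derivable_pt_lim_const. Qed.
Lemma Dv_ln f x a : derivable_pt_lim f x a -> 0 < f x ->
  derivable_pt_lim (fun t => ln (f t)) x (/ f x * a).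
Proof. intros H H0. apply (derivable_pt_lim_comp f ln); auto. apply derivable_pt_lim_ln; auto. Qed.
Lemma Dv_sqrt f x a : derivable_pt_lim f x a -> 0 < f x ->
  derivable_pt_lim (fun t => sqrt (f t)) x (/ (2 * sqrt (f x)) * a).
Proof. intros H H0. apply (derivable_pt_lim_comp f sqrt); auto. apply derivable_pt_lim_sqrt; auto. Qed.
Lemma Dv_inv f x a : derivable_pt_lim f x a -> f x <> 0 ->
  derivable_pt_lim (fun t => / f t) x (- a / (f x)^2).
Proof. intros H H0.
  apply derivable_pt_lim_ext with (f := fun t => 1 / f t); [intro; unfold Rdiv; ring|].
  eapply Dv_eq. apply Dv_div; try apply Dv_const; try exact H; try exact H0. unfold Rsqr; field; auto. Qed.
Lemma Dv_lnsq f x a : derivable_pt_lim f x a -> f x <> 0 ->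
  derivable_pt_lim (fun t => ln (f t ^ 2)) x (2 * a / f x).
Proof. intros H H0.
  apply derivable_pt_lim_ext with (f := fun t => ln (f t * f t)); [intro; f_equal; ring|].
  eapply Dv_eq. apply Dv_ln. apply Dv_mult; [exact H | exact H].
  - assert (0 < Rsqr (f x)) by (apply Rsqr_pos_lt; auto). unfold Rsqr in *; lra.
  - cbv beta; field; auto. Qed.

Lemma pdu_ext U f g u v a : open2 U -> U u v -> (forall a b, U a b -> f a b = g a b) ->
  pdu f u v a -> pdu g u v a.
Proof. intros hU Huv Hfg H. destruct (hU u v Huv) as [d [Hd HU]]. unfold pdu in *.
  apply (derivable_pt_lim_locally_ext (fun s => f s v) _ _ (u - d) (u + d) _); auto. lra.
  intros z Hz. apply Hfg, HU. apply Rabs_def1; lra. rewrite Rminus_diag, Rabs_R0; lra. Qed.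
Lemma pdv_ext U f g u v a : open2 U -> U u v -> (forall a b, U a b -> f a b = g a b) ->
  pdv f u v a -> pdv g u v a.
Proof. intros hU Huv Hfg H. destruct (hU u v Huv) as [d [Hd HU]]. unfold pdv in *.
  apply (derivable_pt_lim_locally_ext (fun t => f u t) _ _ (v - d) (v + d) _); auto. lra.
  intros z Hz. apply Hfg, HU. rewrite Rminus_diag, Rabs_R0; lra. apply Rabs_def1; lra. Qed.

Lemma small_eq a : (forall eps, eps > 0 -> Rabs a < eps) -> a = 0.
Proof. intros H. destruct (Req_dec a 0); auto. exfalso.
  specialize (H (Rabs a) (Rabs_pos_lt _ H0)). lra. Qed.

Lemma schwarz U F A B P Q u v : open2 U -> U u v ->
  (forall a b, U a b -> pdu F a b (A a b) /\ pdv F a b (B a b) /\ pdv A a b (P a b) /\ pdu B a b (Q a b)) ->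
  cont2 U P -> cont2 U Q -> P u v = Q u v.
Proof.
  intros hU Huv HD HP HQ.
  cut (P u v - Q u v = 0). lra. apply small_eq. intros eps He.
  destruct (hU u v Huv) as [d0 [Hd0 HU0]].
  destruct (HP u v Huv (eps/2)) as [d1 [Hd1 HP1]]. lra.
  destruct (HQ u v Huv (eps/2)) as [d2 [Hd2 HQ1]]. lra.
  set (h := Rmin d0 (Rmin d1 d2) / 2).
  assert (Hm1 := Rmin_l d0 (Rmin d1 d2)). assert (Hm2 := Rmin_r d0 (Rmin d1 d2)).
  assert (Hm3 := Rmin_l d1 d2). assert (Hm4 := Rmin_r d1 d2).
  assert (Hmp : 0 < Rmin d0 (Rmin d1 d2)) by (repeat apply Rmin_glb_lt; auto).
  assert (Hh : 0 < h) by (unfold h; lra).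
  assert (Hh0 : h < d0) by (unfold h; lra).
  assert (Hh1 : h < d1) by (unfold h; lra).
  assert (Hh2 : h < d2) by (unfold h; lra).
  assert (HUin : forall a b, u <= a <= u + h -> v <= b <= v + h -> U a b).
  { intros a b Ha Hb. apply HU0; apply Rabs_def1; lra. }
  destruct (MVT_cor2 (fun t => F t (v+h) - F t v) (fun t => A t (v+h) - A t v) u (u+h))
    as [xi [HA Hxi]]. lra.
  { intros c Hc. apply Dv_minus; apply HD; apply HUin; lra. }
  destruct (MVT_cor2 (fun t => A xi t) (fun t => P xi t) v (v+h)) as [eta [HB Heta]]. lra.
  { intros c Hc. apply HD; apply HUin; lra. }
  destruct (MVT_cor2 (fun t => F (u+h) t - F u t) (fun t => B (u+h) t - B u t) v (v+h))
    as [eta' [HC Heta']]. lra.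
  { intros c Hc. apply Dv_minus; apply HD; apply HUin; lra. }
  destruct (MVT_cor2 (fun t => B t eta') (fun t => Q t eta') u (u+h)) as [xi' [HD' Hxi']]. lra.
  { intros c Hc. apply HD; apply HUin; lra. }
  simpl in HA, HB, HC, HD'.
  assert (Heq : P xi eta * (h * h) = Q xi' eta' * (h * h)).
  { replace (v + h - v) with h in * by ring. replace (u + h - u) with h in * by ring.
    transitivity (F (u+h) (v+h) - F (u+h) v - (F u (v+h) - F u v)).
    - rewrite HA. rewrite HB. ring.
    - replace (F (u + h) (v + h) - F (u + h) v - (F u (v + h) - F u v)) with
        (F (u + h) (v + h) - F u (v + h) - (F (u + h) v - F u v)) by ring.
      rewrite HC, HD'. ring. }
  assert (Hpq : P xi eta = Q xi' eta').
  { apply Rmult_eq_reg_r with (h*h); auto. apply Rgt_not_eq. apply Rmult_lt_0_compat; auto. }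
  assert (H1 : Rabs (P xi eta - P u v) < eps/2) by (apply HP1; apply Rabs_def1; lra).
  assert (H2 : Rabs (Q xi' eta' - Q u v) < eps/2) by (apply HQ1; apply Rabs_def1; lra).
  apply Rabs_def2 in H1. apply Rabs_def2 in H2. apply Rabs_def1; lra.
Qed.

Lemma smooth_d1 U F : smooth2 U F -> exists Fu Fv : R -> R -> R,
  forall a b, U a b -> pdu F a b (Fu a b) /\ pdv F a b (Fv a b).
Proof. intros hs. destruct (hs 1%nat) as [_ [fu [fv [H _]]]]. exists fu, fv; exact H. Qed.

Lemma smooth_mixed U F A B u v P Q : open2 U -> smooth2 U F ->
  (forall a b, U a b -> pdu F a b (A a b) /\ pdv F a b (B a b)) -> U u v ->
  pdv A u v P -> pdu B u v Q -> P = Q.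
Proof.
  intros hU hs HAB Huv HP HQ.
  destruct (hs 2%nat) as [_ [fu [fv [Hd [[_ [fuu [fuv [Hd1 [_ C1]]]]] [_ [fvu [fvv [Hd2 [C2 _]]]]]]]]]].
  assert (EA : forall a b, U a b -> fu a b = A a b).
  { intros a b Hab. eapply uniqueness_limite. apply (proj1 (Hd a b Hab)). apply (proj1 (HAB a b Hab)). }
  assert (EB : forall a b, U a b -> fv a b = B a b).
  { intros a b Hab. eapply uniqueness_limite. apply (proj2 (Hd a b Hab)). apply (proj2 (HAB a b Hab)). }
  assert (HS : fuv u v = fvu u v).
  { apply (schwarz U F fu fv fuv fvu u v hU Huv); auto.
    intros a b Hab. repeat split; try apply Hd; auto; try apply Hd1; auto; apply Hd2; auto. }
  assert (HP' : pdv fu u v P).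
  { apply (pdv_ext U A fu u v P hU Huv); auto. intros; symmetry; auto. }
  assert (HQ' : pdu fv u v Q).
  { apply (pdu_ext U B fv u v Q hU Huv); auto. intros; symmetry; auto. }
  assert (P = fuv u v) by (eapply uniqueness_limite; [apply HP' | apply Hd1; auto]).
  assert (Q = fvu u v) by (eapply uniqueness_limite; [apply HQ' | apply Hd2; auto]).
  congruence.
Qed.

Lemma svec U X A B P Q u v : open2 U -> smoothV U X ->
  (forall a b, U a b -> pduV X a b (A a b) /\ pdvV X a b (B a b)) -> U u v ->
  pdvV A u v P -> pduV B u v Q -> P = Q.
Proof.
  intros hU [s0 [s1 [s2 s3]]] HAB Huv [P0 [P1 [P2 P3]]] [Q0 [Q1 [Q2 Q3]]].
  destruct P as [p0 p1 p2 p3], Q as [q0 q1 q2 q3]; simpl in *.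
  f_equal.
  - apply (smooth_mixed U (fun s t => c0 (X s t)) (fun s t => c0 (A s t)) (fun s t => c0 (B s t)) u v); eauto.
    intros a b Hab; destruct (HAB a b Hab) as [[? _] [? _]]; split; auto.
  - apply (smooth_mixed U (fun s t => Defs.c1 (X s t)) (fun s t => Defs.c1 (A s t)) (fun s t => Defs.c1 (B s t)) u v); eauto.
    intros a b Hab; destruct (HAB a b Hab) as [[_ [? _]] [_ [? _]]]; split; auto.
  - apply (smooth_mixed U (fun s t => c2 (X s t)) (fun s t => c2 (A s t)) (fun s t => c2 (B s t)) u v); eauto.
    intros a b Hab; destruct (HAB a b Hab) as [[_ [_ [? _]]] [_ [_ [? _]]]]; split; auto.
  - apply (smooth_mixed U (fun s t => c3 (X s t)) (fun s t => c3 (A s t)) (fun s t => c3 (B s t)) u v); eauto.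
    intros a b Hab; destruct (HAB a b Hab) as [[_ [_ [_ ?]]] [_ [_ [_ ?]]]]; split; auto.
Qed.

Lemma pduV_add X Y u v a b : pduV X u v a -> pduV Y u v b ->
  pduV (fun s t => vadd (X s t) (Y s t)) u v (vadd a b).
Proof. unfold pduV, pdu; simpl; intros [? [? [? ?]]] [? [? [? ?]]].
  repeat split; apply Dv_plus; auto. Qed.
Lemma pdvV_add X Y u v a b : pdvV X u v a -> pdvV Y u v b ->
  pdvV (fun s t => vadd (X s t) (Y s t)) u v (vadd a b).
Proof. unfold pdvV, pdv; simpl; intros [? [? [? ?]]] [? [? [? ?]]].
  repeat split; apply Dv_plus; auto. Qed.
Lemma pduV_scale f X u v a W : pdu f u v a -> pduV X u v W ->
  pduV (fun s t => vscale (f s t) (X s t)) u v (vadd (vscale a (X u v)) (vscale (f u v) W)).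
Proof. unfold pduV, pdu; simpl; intros Hf [? [? [? ?]]].
  repeat split; apply (Dv_mult (fun s => f s v)); auto. Qed.
Lemma pdvV_scale f X u v a W : pdv f u v a -> pdvV X u v W ->
  pdvV (fun s t => vscale (f s t) (X s t)) u v (vadd (vscale a (X u v)) (vscale (f u v) W)).
Proof. unfold pdvV, pdv; simpl; intros Hf [? [? [? ?]]].
  repeat split; apply (Dv_mult (fun t => f u t)); auto. Qed.

Lemma dot_add_r a b c : dot a (vadd b c) = dot a b + dot a c.
Proof. unfold dot, vadd; simpl; ring. Qed.
Lemma dot_scale_r a k b : dot a (vscale k b) = k * dot a b.
Proof. unfold dot, vscale; simpl; ring. Qed.
Lemma dot_comm a b : dot a b = dot b a.
Proof. unfold dot; ring. Qed.

Lemma pdu_opp f u v a : pdu f u v a -> pdu (fun s t => - f s t) u v (- a).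
Proof. unfold pdu; intros; apply (derivable_pt_lim_opp (fun s => f s v)); auto. Qed.
Lemma pdv_opp f u v a : pdv f u v a -> pdv (fun s t => - f s t) u v (- a).
Proof. unfold pdv; intros; apply (derivable_pt_lim_opp (fun t => f u t)); auto. Qed.

Lemma lap_ext U F G L : open2 U -> (forall a b, U a b -> F a b = G a b) ->
  is_laplacian U F L -> is_laplacian U G L.
Proof. intros hU HFG [fu [fv [fuu [fvv H]]]]. exists fu, fv, fuu, fvv.
  intros a b Hab. destruct (H a b Hab) as [H1 [H2 [H3 [H4 H5]]]]. repeat split; auto.
  eapply pdu_ext; eauto. eapply pdv_ext; eauto. Qed.
Lemma lap_scale U F L c : is_laplacian U F L ->
  is_laplacian U (fun a b => c * F a b) (fun a b => c * L a b).
Proof. intros [fu [fv [fuu [fvv H]]]].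
  exists (fun a b => c * fu a b), (fun a b => c * fv a b), (fun a b => c * fuu a b), (fun a b => c * fvv a b).
  intros a b Hab. destruct (H a b Hab) as [H1 [H2 [H3 [H4 H5]]]]. unfold pdu, pdv in *.
  repeat split; try apply Dv_scal; auto. rewrite H5; ring. Qed.

Lemma lap_build U F f fu_f fv_f p q P Q cu cv :
  (forall a b, U a b -> f a b <> 0 /\ pdu f a b (fu_f a b) /\ pdv f a b (fv_f a b) /\
     pdu p a b (P a b) /\ pdv q a b (Q a b) /\ pdu F a b (cu * (p a b / f a b)) /\
     pdv F a b (cv * (q a b / f a b))) ->
  is_laplacian U F (fun a b => cu * ((P a b * f a b - fu_f a b * p a b) / Rsqr (f a b))
                            + cv * ((Q a b * f a b - fv_f a b * q a b) / Rsqr (f a b))).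
Proof. intros H.
  exists (fun a b => cu * (p a b / f a b)), (fun a b => cv * (q a b / f a b)),
    (fun a b => cu * ((P a b * f a b - fu_f a b * p a b) / Rsqr (f a b))),
    (fun a b => cv * ((Q a b * f a b - fv_f a b * q a b) / Rsqr (f a b))).
  intros a b Hab. destruct (H a b Hab) as [H0 [H1 [H2 [H3 [H4 [H5 H6]]]]]].
  unfold pdu, pdv in *. repeat split; auto.
  - apply Dv_scal. apply (Dv_div (fun s => p s b) (fun s => f s b)); auto.
  - apply Dv_scal. apply (Dv_div (fun t => q a t) (fun t => f a t)); auto.
Qed.

Lemma ln_abs w : w <> 0 -> ln (Rabs w) = /2 * ln (w ^ 2).
Proof. intros Hw. rewrite <- pow2_abs. rewrite ln_pow. simpl INR. field.
  apply Rabs_pos_lt; auto. Qed.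
Lemma ln_sqrt_abs w : w <> 0 -> ln (sqrt (Rabs w)) = /4 * ln (w ^ 2).
Proof. intros Hw. assert (0 < Rabs w) by (apply Rabs_pos_lt; auto).
  rewrite <- Rpower_sqrt by auto. rewrite ln_Rpower.
  rewrite <- pow2_abs. rewrite ln_pow by auto. simpl INR. field. Qed.
Lemma ln_abs2 w : w <> 0 -> ln (w ^ 2) = 2 * ln (Rabs w).
Proof. intros Hw. rewrite ln_abs by auto. field. Qed.
Lemma Rpower_pos a y : 0 < Rpower a y.
Proof. unfold Rpower; apply exp_pos. Qed.
Lemma sqrt_Rp a : 0 < a -> sqrt (Rpower a (- (1/2))) = / Rpower a (1/4).
Proof. intros Ha. rewrite <- Rpower_sqrt by apply Rpower_pos. rewrite Rpower_mult.
  rewrite <- Rpower_Ropp. f_equal. field. Qed.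
Lemma sqrt_Rp2 a : 0 < a -> sqrt a = Rpower a (1/4) ^ 2.
Proof. intros Ha. rewrite <- Rpower_sqrt by auto. simpl. rewrite Rmult_1_r, <- Rpower_plus.
  f_equal. field. Qed.
Lemma Rp_sq a : 0 < a -> Rpower (a ^ 2) (1/4) = sqrt a.
Proof. intros Ha. rewrite <- (Rpower_pow 2) by auto. rewrite Rpower_mult.
  rewrite <- Rpower_sqrt by auto. f_equal. simpl. field. Qed.

Ltac dsimp H := repeat (rewrite dot_add_r in H || rewrite dot_scale_r in H);
  repeat match goal with E : dot ?a ?b = _ |- _ => progress rewrite E in H end.

Theorem mainTheorem9
  (U : R -> R -> Prop) (z x y n1 n2 : R -> R -> V4)
  (E nu mu gamma1 gamma2 beta1 beta2 : R -> R -> R)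
  (hU : open2 U)
  (hsz : smoothV U z) (hsx : smoothV U x) (hsy : smoothV U y)
  (hsn1 : smoothV U n1) (hsn2 : smoothV U n2)
  (hsE : smooth2 U E) (hsnu : smooth2 U nu) (hsmu : smooth2 U mu)
  (hsg1 : smooth2 U gamma1) (hsg2 : smooth2 U gamma2)
  (hsb1 : smooth2 U beta1) (hsb2 : smooth2 U beta2)
  (* geometric frame: positively oriented orthonormal *)
  (hframe : forall u v, U u v -> pos_orthonormal (x u v) (y u v) (n1 u v) (n2 u v))
  (* invariant conditions *)
  (hmu : forall u v, U u v -> mu u v > 0)
  (hnu : forall u v, U u v -> nu u v <> 0)
  (hmunu : forall u v, U u v -> mu u v ^ 2 <> nu u v ^ 2)
  (* strongly regular *)
  (hreg : forall u v, U u v -> gamma1 u v * gamma2 u v <> 0)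
  (* canonical parameters: E = G = |mu^2 - nu^2|^(-1/2), F = 0,
     x = z_u / sqrt E, y = z_v / sqrt G *)
  (hE : forall u v, U u v -> E u v = Rpower (Rabs (mu u v ^ 2 - nu u v ^ 2)) (- (1/2)))
  (hzu : forall u v, U u v -> pduV z u v (vscale (sqrt (E u v)) (x u v)))
  (hzv : forall u v, U u v -> pdvV z u v (vscale (sqrt (E u v)) (y u v)))
  (* derivative formulas of the geometric frame; nabla'_x = (1/sqrt E) d/du,
     nabla'_y = (1/sqrt G) d/dv with G = E *)
  (hxx : forall u v, U u v -> pduV x u v
     (vscale (sqrt (E u v)) (vadd (vscale (gamma1 u v) (y u v)) (vscale (nu u v) (n1 u v)))))
  (hxy : forall u v, U u v -> pduV y u v
     (vscale (sqrt (E u v)) (vadd (vscale (- gamma1 u v) (x u v)) (vscale (mu u v) (n2 u v)))))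
  (hyx : forall u v, U u v -> pdvV x u v
     (vscale (sqrt (E u v)) (vadd (vscale (- gamma2 u v) (y u v)) (vscale (mu u v) (n2 u v)))))
  (hyy : forall u v, U u v -> pdvV y u v
     (vscale (sqrt (E u v)) (vadd (vscale (gamma2 u v) (x u v)) (vscale (- nu u v) (n1 u v)))))
  (hxn1 : forall u v, U u v -> pduV n1 u v
     (vscale (sqrt (E u v)) (vadd (vscale (- nu u v) (x u v)) (vscale (beta1 u v) (n2 u v)))))
  (hyn1 : forall u v, U u v -> pdvV n1 u v
     (vscale (sqrt (E u v)) (vadd (vscale (nu u v) (y u v)) (vscale (beta2 u v) (n2 u v)))))
  (hxn2 : forall u v, U u v -> pduV n2 u v
     (vscale (sqrt (E u v)) (vadd (vscale (- mu u v) (y u v)) (vscale (- beta1 u v) (n1 u v)))))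
  (hyn2 : forall u v, U u v -> pdvV n2 u v
     (vscale (sqrt (E u v)) (vadd (vscale (- mu u v) (x u v)) (vscale (- beta2 u v) (n1 u v))))) :
  let f := fun u v => Rpower (Rabs (mu u v ^ 2 - nu u v ^ 2)) (1/4) in
  let h := fun u v => ln (sqrt (Rabs ((mu u v + nu u v) / (mu u v - nu u v)))) in
  let K := fun u v => - (mu u v ^ 2 + nu u v ^ 2) in
  let kappa := fun u v => 2 * nu u v * mu u v in
  (forall u v, U u v ->
     pdv f u v (gamma1 u v) /\ pdu f u v (gamma2 u v) /\
     (exists d, pdv h u v d /\ beta1 u v = - f u v * d) /\
     (exists d, pdu h u v d /\ beta2 u v = f u v * d)) /\
  (exists L1, is_laplacian U (fun u v => ln (Rabs (mu u v ^ 2 - nu u v ^ 2))) L1 /\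
     forall u v, U u v ->
       1/4 * sqrt (Rabs (mu u v ^ 2 - nu u v ^ 2)) * L1 u v + nu u v ^ 2 + mu u v ^ 2 = 0) /\
  (exists L2, is_laplacian U (fun u v => ln (Rabs ((mu u v + nu u v) / (mu u v - nu u v)))) L2 /\
     forall u v, U u v ->
       1/2 * sqrt (Rabs (mu u v ^ 2 - nu u v ^ 2)) * L2 u v + 2 * nu u v * mu u v = 0) /\
  (exists L3, is_laplacian U (fun u v => ln (K u v ^ 2 - kappa u v ^ 2)) L3 /\
     forall u v, U u v ->
       1/8 * Rpower (K u v ^ 2 - kappa u v ^ 2) (1/4) * L3 u v - K u v = 0) /\
  (exists L4, is_laplacian U (fun u v => ln ((K u v - kappa u v) / (K u v + kappa u v))) L4 /\
     forall u v, U u v ->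
       1/4 * Rpower (K u v ^ 2 - kappa u v ^ 2) (1/4) * L4 u v + kappa u v = 0).
Proof.
  intros f h K kappa.
  destruct (smooth_d1 _ _ hsE) as [Eu [Ev HEd]].
  destruct (smooth_d1 _ _ hsnu) as [Nu [Nv HNd]].
  destruct (smooth_d1 _ _ hsmu) as [Mu [Mv HMd]].
  destruct (smooth_d1 _ _ hsg1) as [G1u [G1v HG1d]].
  destruct (smooth_d1 _ _ hsg2) as [G2u [G2v HG2d]].
  destruct (smooth_d1 _ _ hsb1) as [B1u [B1v HB1d]].
  destruct (smooth_d1 _ _ hsb2) as [B2u [B2v HB2d]].
  assert (HD0 : forall a b, U a b -> mu a b ^ 2 - nu a b ^ 2 <> 0).
  { intros a b Hab. specialize (hmunu a b Hab). lra. }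
  assert (HE0 : forall a b, U a b -> 0 < E a b).
  { intros a b Hab. rewrite hE by auto. apply Rpower_pos. }
  assert (Hsp : forall a b, U a b -> 0 < sqrt (E a b)).
  { intros a b Hab. apply sqrt_lt_R0. auto. }
  assert (Hsu : forall a b, U a b -> pdu (fun a b => sqrt (E a b)) a b (/ (2 * sqrt (E a b)) * Eu a b)).
  { intros a b Hab. unfold pdu. apply (Dv_sqrt (fun s => E s b)); auto. apply HEd; auto. }
  assert (Hsv : forall a b, U a b -> pdv (fun a b => sqrt (E a b)) a b (/ (2 * sqrt (E a b)) * Ev a b)).
  { intros a b Hab. unfold pdv. apply (Dv_sqrt (fun t => E a t)); auto. apply HEd; auto. }
  assert (KEY : forall a b, U a b ->
    let s := sqrt (E a b) in
    let su := / (2 * sqrt (E a b)) * Eu a b in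
    let sv := / (2 * sqrt (E a b)) * Ev a b in
    sv = - s ^ 2 * gamma1 a b /\ su = - s ^ 2 * gamma2 a b /\
    s ^ 2 * beta1 a b * (mu a b ^ 2 - nu a b ^ 2) = - s * (mu a b * Nv a b - nu a b * Mv a b) /\
    s ^ 2 * beta2 a b * (mu a b ^ 2 - nu a b ^ 2) = s * (mu a b * Nu a b - nu a b * Mu a b) /\
    sv * beta1 a b + s * B1v a b - su * beta2 a b - s * B2u a b = 2 * s ^ 2 * nu a b * mu a b /\
    sv * gamma1 a b + s * G1v a b + s ^ 2 * nu a b ^ 2 = - su * gamma2 a b - s * G2u a b - s ^ 2 * mu a b ^ 2).
  { intros a b Hab s su sv.
    destruct (hframe a b Hab) as [Dxx [Dyy [D11 [D22 [Dxy [Dx1 [Dx2 [Dy1 [Dy2 [D12 _]]]]]]]]]].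
    assert (Dyx := Dxy); rewrite dot_comm in Dyx.
    assert (D1x := Dx1); rewrite dot_comm in D1x.
    assert (D2x := Dx2); rewrite dot_comm in D2x.
    assert (D1y := Dy1); rewrite dot_comm in D1y.
    assert (D2y := Dy2); rewrite dot_comm in D2y.
    assert (D21 := D12); rewrite dot_comm in D21.
    assert (G1 := proj2 (HG1d a b Hab)). assert (G2 := proj1 (HG2d a b Hab)).
    assert (B1 := proj2 (HB1d a b Hab)). assert (B2 := proj1 (HB2d a b Hab)).
    assert (N1 := proj1 (HNd a b Hab)). assert (N2 := proj2 (HNd a b Hab)).
    assert (M1 := proj1 (HMd a b Hab)). assert (M2 := proj2 (HMd a b Hab)).
    pose proof (svec U z (fun s t => vscale (sqrt (E s t)) (x s t)) (fun s t => vscale (sqrt (E s t)) (y s t)) _ _ a b hU hsz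
      (fun a b Hab => conj (hzu a b Hab) (hzv a b Hab)) Hab
      (pdvV_scale _ _ _ _ _ _ (Hsv a b Hab) (hyx a b Hab))
      (pduV_scale _ _ _ _ _ _ (Hsu a b Hab) (hxy a b Hab))) as Ez.
    pose proof (svec U x
      (fun s t => vscale (sqrt (E s t)) (vadd (vscale (gamma1 s t) (y s t)) (vscale (nu s t) (n1 s t))))
      (fun s t => vscale (sqrt (E s t)) (vadd (vscale (- gamma2 s t) (y s t)) (vscale (mu s t) (n2 s t))))
      _ _ a b hU hsx (fun a b Hab => conj (hxx a b Hab) (hyx a b Hab)) Hab
      (pdvV_scale _ _ _ _ _ _ (Hsv a b Hab) (pdvV_add _ _ _ _ _ _
          (pdvV_scale _ _ _ _ _ _ G1 (hyy a b Hab)) (pdvV_scale _ _ _ _ _ _ N2 (hyn1 a b Hab))))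
      (pduV_scale _ _ _ _ _ _ (Hsu a b Hab) (pduV_add _ _ _ _ _ _
          (pduV_scale _ _ _ _ _ _ (pdu_opp _ _ _ _ G2) (hxy a b Hab)) (pduV_scale _ _ _ _ _ _ M1 (hxn2 a b Hab))))) as Ex.
    pose proof (svec U n1
      (fun s t => vscale (sqrt (E s t)) (vadd (vscale (- nu s t) (x s t)) (vscale (beta1 s t) (n2 s t))))
      (fun s t => vscale (sqrt (E s t)) (vadd (vscale (nu s t) (y s t)) (vscale (beta2 s t) (n2 s t))))
      _ _ a b hU hsn1 (fun a b Hab => conj (hxn1 a b Hab) (hyn1 a b Hab)) Hab
      (pdvV_scale _ _ _ _ _ _ (Hsv a b Hab) (pdvV_add _ _ _ _ _ _
          (pdvV_scale _ _ _ _ _ _ (pdv_opp _ _ _ _ N2) (hyx a b Hab)) (pdvV_scale _ _ _ _ _ _ B1 (hyn2 a b Hab))))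
      (pduV_scale _ _ _ _ _ _ (Hsu a b Hab) (pduV_add _ _ _ _ _ _
          (pduV_scale _ _ _ _ _ _ N1 (hxy a b Hab)) (pduV_scale _ _ _ _ _ _ B2 (hxn2 a b Hab))))) as En1.
    pose proof (svec U n2
      (fun s t => vscale (sqrt (E s t)) (vadd (vscale (- mu s t) (y s t)) (vscale (- beta1 s t) (n1 s t))))
      (fun s t => vscale (sqrt (E s t)) (vadd (vscale (- mu s t) (x s t)) (vscale (- beta2 s t) (n1 s t))))
      _ _ a b hU hsn2 (fun a b Hab => conj (hxn2 a b Hab) (hyn2 a b Hab)) Hab
      (pdvV_scale _ _ _ _ _ _ (Hsv a b Hab) (pdvV_add _ _ _ _ _ _
          (pdvV_scale _ _ _ _ _ _ (pdv_opp _ _ _ _ M2) (hyy a b Hab)) (pdvV_scale _ _ _ _ _ _ (pdv_opp _ _ _ _ B1) (hyn1 a b Hab))))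
      (pduV_scale _ _ _ _ _ _ (Hsu a b Hab) (pduV_add _ _ _ _ _ _
          (pduV_scale _ _ _ _ _ _ (pdu_opp _ _ _ _ M1) (hxx a b Hab)) (pduV_scale _ _ _ _ _ _ (pdu_opp _ _ _ _ B2) (hxn1 a b Hab))))) as En2.
    assert (Zx := f_equal (dot (x a b)) Ez). assert (Zy := f_equal (dot (y a b)) Ez).
    assert (Xy := f_equal (dot (y a b)) Ex).
    assert (N1x := f_equal (dot (x a b)) En1). assert (N1y := f_equal (dot (y a b)) En1).
    assert (N1n := f_equal (dot (n2 a b)) En1).
    assert (N2x := f_equal (dot (x a b)) En2). assert (N2y := f_equal (dot (y a b)) En2).
    clear Ez Ex En1 En2.
    cbv beta in Zx, Zy, Xy, N1x, N1y, N1n, N2x, N2y.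
    dsimp Zx; dsimp Zy; dsimp Xy; dsimp N1x; dsimp N1y; dsimp N1n; dsimp N2x; dsimp N2y.
    unfold s, su, sv.
    assert (Hs0 : 0 < sqrt (E a b)) by (apply Hsp; auto).
    assert (R1 : / (2 * sqrt (E a b)) * Ev a b = - sqrt (E a b) ^ 2 * gamma1 a b) by lra.
    assert (R2 : / (2 * sqrt (E a b)) * Eu a b = - sqrt (E a b) ^ 2 * gamma2 a b) by lra.
    pose proof (f_equal (Rmult (mu a b)) N1x). pose proof (f_equal (Rmult (nu a b)) N2y).
    pose proof (f_equal (Rmult (mu a b)) N1y). pose proof (f_equal (Rmult (nu a b)) N2x).
    repeat split; lra.
  }
  assert (Hmn : forall a b, U a b -> mu a b - nu a b <> 0 /\ mu a b + nu a b <> 0).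
  { intros a b Hab. split; intro H0; apply (HD0 a b Hab);
    replace (mu a b ^ 2 - nu a b ^ 2) with ((mu a b - nu a b) * (mu a b + nu a b)) by ring;
    rewrite H0; ring. }
  assert (Hfs : forall a b, U a b -> f a b = / sqrt (E a b)).
  { intros a b Hab. unfold f. rewrite hE by auto. rewrite sqrt_Rp. rewrite Rinv_inv. reflexivity.
    apply Rabs_pos_lt; auto. }
  assert (Hfp : forall a b, U a b -> 0 < f a b).
  { intros a b Hab. unfold f. apply Rpower_pos. }
  assert (Hsq : forall a b, U a b -> sqrt (Rabs (mu a b ^ 2 - nu a b ^ 2)) = f a b ^ 2).
  { intros a b Hab. unfold f. apply sqrt_Rp2. apply Rabs_pos_lt; auto. }
  assert (Hfu : forall a b, U a b -> pdu f a b (gamma2 a b)).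
  { intros a b Hab. apply (pdu_ext U (fun a b => / sqrt (E a b))); auto.
    intros; symmetry; apply Hfs; auto.
    unfold pdu. eapply Dv_eq. apply (Dv_inv (fun s => sqrt (E s b))). apply Hsu; auto.
    specialize (Hsp a b Hab); lra.
    pose proof (KEY a b Hab) as HK; cbv zeta in HK; destruct HK as [R1 [R2 _]].
    rewrite R2. specialize (Hsp a b Hab). field. lra. }
  assert (Hfv : forall a b, U a b -> pdv f a b (gamma1 a b)).
  { intros a b Hab. apply (pdv_ext U (fun a b => / sqrt (E a b))); auto.
    intros; symmetry; apply Hfs; auto.
    unfold pdv. eapply Dv_eq. apply (Dv_inv (fun t => sqrt (E a t))). apply Hsv; auto.
    specialize (Hsp a b Hab); lra.
    pose proof (KEY a b Hab) as HK; cbv zeta in HK; destruct HK as [R1 [R2 _]].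
    rewrite R1. specialize (Hsp a b Hab). field. lra. }
  assert (Hhext : forall a b, U a b -> /4 * ln (((mu a b + nu a b) / (mu a b - nu a b)) ^ 2) = h a b).
  { intros a b Hab. unfold h. rewrite ln_sqrt_abs. reflexivity.
    destruct (Hmn a b Hab). unfold Rdiv. apply Rmult_integral_contrapositive; split; auto.
    apply Rinv_neq_0_compat; auto. }
  assert (Hwext : forall a b, U a b -> /2 * ln (((mu a b + nu a b) / (mu a b - nu a b)) ^ 2) =
     ln (Rabs ((mu a b + nu a b) / (mu a b - nu a b)))).
  { intros a b Hab. rewrite ln_abs. reflexivity.
    destruct (Hmn a b Hab). unfold Rdiv. apply Rmult_integral_contrapositive; split; auto.
    apply Rinv_neq_0_compat; auto. }
  assert (Hwu : forall a b, U a b -> pdu (fun a b => ln (((mu a b + nu a b) / (mu a b - nu a b)) ^ 2)) a b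
      (4 * ((mu a b * Nu a b - nu a b * Mu a b) / (mu a b ^ 2 - nu a b ^ 2)))).
  { intros a b Hab. destruct (Hmn a b Hab) as [Hm1 Hm2]. unfold pdu. eapply Dv_eq.
    apply Dv_lnsq. apply (Dv_div (fun s => mu s b + nu s b) (fun s => mu s b - nu s b)).
    apply Dv_plus; [apply HMd | apply HNd]; auto. apply Dv_minus; [apply HMd | apply HNd]; auto.
    auto. unfold Rdiv. apply Rmult_integral_contrapositive; split; auto.
    apply Rinv_neq_0_compat; auto.
    unfold Rsqr. field. repeat split; auto. }
  assert (Hwv : forall a b, U a b -> pdv (fun a b => ln (((mu a b + nu a b) / (mu a b - nu a b)) ^ 2)) a b
      (4 * ((mu a b * Nv a b - nu a b * Mv a b) / (mu a b ^ 2 - nu a b ^ 2)))).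
  { intros a b Hab. destruct (Hmn a b Hab) as [Hm1 Hm2]. unfold pdv. eapply Dv_eq.
    apply Dv_lnsq. apply (Dv_div (fun t => mu a t + nu a t) (fun t => mu a t - nu a t)).
    apply Dv_plus; [apply HMd | apply HNd]; auto. apply Dv_minus; [apply HMd | apply HNd]; auto.
    auto. unfold Rdiv. apply Rmult_integral_contrapositive; split; auto.
    apply Rinv_neq_0_compat; auto.
    unfold Rsqr. field. repeat split; auto. }
  assert (Hb1 : forall a b, U a b -> beta1 a b =
      - f a b * ((mu a b * Nv a b - nu a b * Mv a b) / (mu a b ^ 2 - nu a b ^ 2))).
  { intros a b Hab. pose proof (KEY a b Hab) as HK; cbv zeta in HK; destruct HK as [R1 [R2 [K3 _]]].
    rewrite Hfs by auto. specialize (Hsp a b Hab). specialize (HD0 a b Hab).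
    set (s := sqrt (E a b)) in *.
    apply Rmult_eq_reg_l with (s ^ 2 * (mu a b ^ 2 - nu a b ^ 2)).
    replace (s ^ 2 * (mu a b ^ 2 - nu a b ^ 2) *
      (- / s * ((mu a b * Nv a b - nu a b * Mv a b) / (mu a b ^ 2 - nu a b ^ 2))))
      with (- s * (mu a b * Nv a b - nu a b * Mv a b)) by (field; split; lra).
    lra. apply Rmult_integral_contrapositive; split; auto. apply pow_nonzero; lra. }
  assert (Hb2 : forall a b, U a b -> beta2 a b =
      f a b * ((mu a b * Nu a b - nu a b * Mu a b) / (mu a b ^ 2 - nu a b ^ 2))).
  { intros a b Hab. pose proof (KEY a b Hab) as HK; cbv zeta in HK; destruct HK as [R1 [R2 [K3 [K4 _]]]].
    rewrite Hfs by auto. specialize (Hsp a b Hab). specialize (HD0 a b Hab).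
    set (s := sqrt (E a b)) in *.
    apply Rmult_eq_reg_l with (s ^ 2 * (mu a b ^ 2 - nu a b ^ 2)).
    replace (s ^ 2 * (mu a b ^ 2 - nu a b ^ 2) *
      (/ s * ((mu a b * Nu a b - nu a b * Mu a b) / (mu a b ^ 2 - nu a b ^ 2))))
      with (s * (mu a b * Nu a b - nu a b * Mu a b)) by (field; split; lra).
    lra. apply Rmult_integral_contrapositive; split; auto. apply pow_nonzero; lra. }
  assert (HL1 : exists L1, is_laplacian U (fun u v => ln (Rabs (mu u v ^ 2 - nu u v ^ 2))) L1 /\
     forall u v, U u v ->
       1/4 * sqrt (Rabs (mu u v ^ 2 - nu u v ^ 2)) * L1 u v + nu u v ^ 2 + mu u v ^ 2 = 0).
  { exists (fun a b => 4 * ((G2u a b * f a b - gamma2 a b * gamma2 a b) / Rsqr (f a b)) +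
       4 * ((G1v a b * f a b - gamma1 a b * gamma1 a b) / Rsqr (f a b))).
    split.
    - apply (lap_build U _ f gamma2 gamma1 gamma2 gamma1 G2u G1v 4 4).
      intros a b Hab. specialize (Hfp a b Hab). repeat split.
      + lra.
      + apply Hfu; auto.
      + apply Hfv; auto.
      + apply HG2d; auto.
      + apply HG1d; auto.
      + apply (pdu_ext U (fun a b => 4 * ln (f a b))); auto.
        { intros; unfold f; rewrite ln_Rpower; field. }
        unfold pdu; eapply Dv_eq; [apply Dv_scal; apply (Dv_ln (fun s => f s b)); [apply Hfu; auto | auto] |].
        unfold Rdiv; ring.
      + apply (pdv_ext U (fun a b => 4 * ln (f a b))); auto.
        { intros; unfold f; rewrite ln_Rpower; field. }
        unfold pdv; eapply Dv_eq; [apply Dv_scal; apply (Dv_ln (fun t => f a t)); [apply Hfv; auto | auto] |].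
        unfold Rdiv; ring.
    - intros a b Hab. cbv beta. rewrite Hsq by auto. rewrite Hfs by auto.
      pose proof (KEY a b Hab) as HK; cbv zeta in HK; destruct HK as [R1 [R2 [_ [_ [_ K6]]]]].
      rewrite R1, R2 in K6. specialize (Hsp a b Hab).
      set (s := sqrt (E a b)) in *.
      transitivity ((s * G2u a b - s^2 * gamma2 a b ^ 2 + s * G1v a b - s^2 * gamma1 a b ^ 2
         + s^2 * (nu a b ^ 2 + mu a b ^ 2)) / s ^ 2).
      + unfold Rsqr; field; lra.
      + replace (s * G2u a b - s^2 * gamma2 a b ^ 2 + s * G1v a b - s^2 * gamma1 a b ^ 2
         + s^2 * (nu a b ^ 2 + mu a b ^ 2)) with 0 by lra. unfold Rdiv; ring. }
  assert (HL2 : exists L2, is_laplacian U (fun u v => ln (Rabs ((mu u v + nu u v) / (mu u v - nu u v)))) L2 /\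
     forall u v, U u v ->
       1/2 * sqrt (Rabs (mu u v ^ 2 - nu u v ^ 2)) * L2 u v + 2 * nu u v * mu u v = 0).
  { exists (fun a b => 2 * ((B2u a b * f a b - gamma2 a b * beta2 a b) / Rsqr (f a b)) +
       -2 * ((B1v a b * f a b - gamma1 a b * beta1 a b) / Rsqr (f a b))).
    split.
    - apply (lap_build U _ f gamma2 gamma1 beta2 beta1 B2u B1v 2 (-2)).
      intros a b Hab. specialize (Hfp a b Hab). specialize (HD0 a b Hab). repeat split.
      + lra.
      + apply Hfu; auto.
      + apply Hfv; auto.
      + apply HB2d; auto.
      + apply HB1d; auto.
      + apply (pdu_ext U (fun a b => /2 * ln (((mu a b + nu a b) / (mu a b - nu a b)) ^ 2))); auto.
        unfold pdu; eapply Dv_eq; [apply Dv_scal; apply (Hwu a b Hab) |].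
        rewrite Hb2 by auto. field. lra.
      + apply (pdv_ext U (fun a b => /2 * ln (((mu a b + nu a b) / (mu a b - nu a b)) ^ 2))); auto.
        unfold pdv; eapply Dv_eq; [apply Dv_scal; apply (Hwv a b Hab) |].
        rewrite Hb1 by auto. field. lra.
    - intros a b Hab. cbv beta. rewrite Hsq by auto. rewrite Hfs by auto.
      pose proof (KEY a b Hab) as HK; cbv zeta in HK; destruct HK as [R1 [R2 [_ [_ [K5 _]]]]].
      rewrite R1, R2 in K5. specialize (Hsp a b Hab).
      set (s := sqrt (E a b)) in *.
      transitivity ((s * B2u a b - s^2 * gamma2 a b * beta2 a b - s * B1v a b + s^2 * gamma1 a b * beta1 a b
         + 2 * s^2 * nu a b * mu a b) / s ^ 2).
      + unfold Rsqr; field; lra.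
      + replace (s * B2u a b - s^2 * gamma2 a b * beta2 a b - s * B1v a b + s^2 * gamma1 a b * beta1 a b
         + 2 * s^2 * nu a b * mu a b) with 0 by lra. unfold Rdiv; ring. }
  destruct HL1 as [L1 [HL1 EL1]]. destruct HL2 as [L2 [HL2 EL2]].
  assert (HKk : forall a b, U a b -> K a b ^ 2 - kappa a b ^ 2 = Rabs (mu a b ^ 2 - nu a b ^ 2) ^ 2).
  { intros a b Hab. unfold K, kappa. rewrite pow2_abs. ring. }
  split.
  { intros a b Hab. split; [apply Hfv; auto|]. split; [apply Hfu; auto|]. specialize (HD0 a b Hab). split.
    - exists ((mu a b * Nv a b - nu a b * Mv a b) / (mu a b ^ 2 - nu a b ^ 2)). split.
      + apply (pdv_ext U (fun a b => /4 * ln (((mu a b + nu a b) / (mu a b - nu a b)) ^ 2))); auto.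
        unfold pdv; eapply Dv_eq; [apply Dv_scal; apply (Hwv a b Hab) |]. field; auto.
      + apply Hb1; auto.
    - exists ((mu a b * Nu a b - nu a b * Mu a b) / (mu a b ^ 2 - nu a b ^ 2)). split.
      + apply (pdu_ext U (fun a b => /4 * ln (((mu a b + nu a b) / (mu a b - nu a b)) ^ 2))); auto.
        unfold pdu; eapply Dv_eq; [apply Dv_scal; apply (Hwu a b Hab) |]. field; auto.
      + apply Hb2; auto. }
  split. { exists L1; split; auto. }
  split. { exists L2; split; auto. }
  split.
  { exists (fun a b => 2 * L1 a b). split.
    - apply (lap_ext U (fun a b => 2 * ln (Rabs (mu a b ^ 2 - nu a b ^ 2)))); auto.
      + intros a b Hab. rewrite HKk by auto. rewrite ln_pow by (apply Rabs_pos_lt; auto). simpl INR. ring.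
      + apply lap_scale; auto.
    - intros a b Hab. rewrite HKk by auto. rewrite Rp_sq by (apply Rabs_pos_lt; auto).
      specialize (EL1 a b Hab). unfold K. lra. }
  { exists (fun a b => 2 * L2 a b). split.
    - apply (lap_ext U (fun a b => 2 * ln (Rabs ((mu a b + nu a b) / (mu a b - nu a b))))); auto.
      + intros a b Hab. destruct (Hmn a b Hab) as [Hm1 Hm2].
        replace ((K a b - kappa a b) / (K a b + kappa a b)) with (((mu a b + nu a b) / (mu a b - nu a b)) ^ 2).
        rewrite ln_abs2. reflexivity.
        unfold Rdiv. apply Rmult_integral_contrapositive; split; auto. apply Rinv_neq_0_compat; auto.
        unfold K, kappa. field. split; auto.
        intro H0. apply Hm1. replace (- (mu a b ^ 2 + nu a b ^ 2) + 2 * nu a b * mu a b) with (- ((mu a b - nu a b)^2)) in H0 by ring.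
        nra.
      + apply lap_scale; auto.
    - intros a b Hab. rewrite HKk by auto. rewrite Rp_sq by (apply Rabs_pos_lt; auto).
      specialize (EL2 a b Hab). unfold kappa. lra. }
Qed.
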